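(* Let $\mathbf{G}=(\mathcal{V},\mathcal{E})$ be a directed graph on $\mathcal{V}=\{1,\dots,m\}$ and let $\tau\ge 0$ be an integer. If the weak vertex-connectivity of $\mathbf{G}$ satisfies $\kappa(\bar{\mathbf{G}})\geq \tau+1$, then the TITAN algorithm (described in the context) is $\mathcal{A}$-private for every set $\mathcal{A}\subseteq\mathcal{V}$ of corrupted nodes with $|\mathcal{A}|\le\tau$.
   Context: $\bar{\mathbf{G}}$ is the undirected graph on $\mathcal{V}$ whose edges are the edges of $\mathcal{E}$ with orientation ignored (i.e. $\mathcal{E}$ together with all reversed edges); the weak vertex-connectivity of $\mathbf{G}$ is the vertex-connectivity $\kappa(\bar{\mathbf{G}})$. For $a'>0$ and real $y$, $\mathrm{mod}(y,a')=y-pa'$ with $p$ the unique integer such that $y-pa'\in[0,a')$. Each node $i$ holds a private input $x_i\in[0,a)$ for a fixed $a>0$. TITAN: each node $i$ draws, for each out-neighbor $j$, an independent $r_{ij}$ uniform on $[0,ma)$ and sends it to $j$; it computes $t_i=\mathrm{mod}\big(\sum_{j\in\mathcal{N}_i^{in}} r_{ji}-\sum_{j\in\mathcal{N}_i^{out}} r_{ij}, ma\big)$ and $\tilde{x}_i=\mathrm{mod}(x_i+t_i,ma)$; then all nodes run a deterministic protocol (repeated Top-$k$ max-type consensus on the pairs $(\tilde x_i,i)$) by which every node learns all of $\tilde{x}_1,\dots,\tilde{x}_m$, and output $\frac1m\mathrm{mod}(\sum_i\tilde x_i,ma)$. Adversary: honest-but-curious, corrupting a set $\mathcal{A}$ of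 nodes; it follows the protocol but observes everything stored, sent and received by corrupted nodes. Its view $\mathrm{View}_{\mathcal{A}}(x)$ consists of the inputs $\{x_i: i\in\mathcal{A}\}$, the perturbed inputs $\{\tilde{x}_i: i\notin\mathcal{A}\}$, and the random numbers $\{r_{ij}: i\in\mathcal{A}\text{ or } j\in\mathcal{A}\}$. The algorithm is $\mathcal{A}$-private if for all input vectors $x,x'\in[0,a)^m$ with $x_i=x'_i$ for all $i\in\mathcal{A}$ and $\sum_{i=1}^m x_i=\sum_{i=1}^m x'_i$, the random variables $\mathrm{View}_{\mathcal{A}}(x)$ and $\mathrm{View}_{\mathcal{A}}(x')$ have identical distributions. *)

(* Defs.v *)
From HB Require Import structures.
From mathcomp Require Import all_boot all_order all_algebra.
From mathcomp Require Import all_classical all_reals all_analysis.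
Set Implicit Arguments.
Unset Strict Implicit.
Unset Printing Implicit Defensive.
Import Order.TTheory GRing.Theory Num.Theory.
Local Open Scope classical_set_scope.
Local Open Scope ring_scope.

Definition ubar (m : nat) (e : rel 'I_m) : rel 'I_m :=
  fun u v => (u != v) && (e u v || e v u).

Definition connected_avoiding (m : nat) (g : rel 'I_m) (S : {set 'I_m}) : bool :=
  [forall u, forall v, (u \notin S) ==> (v \notin S) ==>
     connect [rel x y | [&& g x y, x \notin S & y \notin S]] u v].

Definition k_connected (m : nat) (g : rel 'I_m) (k : nat) : bool :=
  (k < m)%N && [forall S : {set 'I_m}, (#|S| < k)%N ==> connected_avoiding g S].

Definition vertex_connectivity (m : nat) (g : rel 'I_m) : nat :=
  \max_(k < m.+1 | k_connected g k) k.

Definition weak_vertex_connectivity (m : nat) (e : rel 'I_m) : nat :=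
  vertex_connectivity (ubar e).

Definition modR (R : realType) (a' y : R) : R :=
  y - (Num.floor (y / a'))%:~R * a'.

(** t_i computed from the realized random numbers r (r i j sent from i to j). *)
Definition titan_t (R : realType) (m : nat) (e : rel 'I_m) (M : R)
    (r : 'I_m -> 'I_m -> R) (i : 'I_m) : R :=
  modR M (\sum_(j | e j i) r j i - \sum_(j | e i j) r i j).

Definition titan_xt (R : realType) (m : nat) (e : rel 'I_m) (M : R)
    (x : 'I_m -> R) (r : 'I_m -> 'I_m -> R) (i : 'I_m) : R :=
  modR M (x i + titan_t e M r i).

(** Indices of view components: inputs x_i, perturbed inputs, random numbers. *)
Definition view_index (m : nat) : Type := (('I_m + 'I_m) + ('I_m * 'I_m))%type.

(** The adversary's view (components not observed are set to the constant 0). *)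
Definition titan_view (R : realType) (m : nat) (e : rel 'I_m) (a : R)
    (A : {set 'I_m}) (x : 'I_m -> R) (r : 'I_m -> 'I_m -> R) :
    view_index m -> R :=
  fun k => match k with
  | inl (inl i) => if i \in A then x i else 0
  | inl (inr i) => if i \notin A then titan_xt e (m%:R * a) x r i else 0
  | inr (i, j) => if e i j && ((i \in A) || (j \in A)) then r i j else 0
  end.

Definition uniform_rv (d : measure_display) (T : measurableType d) (R : realType)
    (P : probability T R) (X : T -> R) (M : R) : Prop :=
  measurable_fun setT X /\
  forall B : set R, measurable B ->
    P (X @^-1` B) = (lebesgue_measure (B `&` `[0%R, M[%classic) * (M^-1)%:E)%E.

Definition independent_family (d : measure_display) (T : measurableType d)
    (R : realType) (P : probability T R) (I : finType) (sel : pred I)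
    (X : I -> T -> R) : Prop :=
  forall B : I -> set R, (forall i, measurable (B i)) ->
    P [set w | forall i, sel i -> B i (X i w)] =
    (\prod_(i | sel i) P (X i @^-1` B i))%E.

(** Cylinder sets of K -> R; they generate the product sigma-algebra. *)
Definition cylinder_sets (K : Type) (R : realType) : set (set (K -> R)) :=
  [set C | exists (k : K) (B : set R), measurable B /\ C = [set f | B (f k)]].

Definition same_distribution (d : measure_display) (T : measurableType d)
    (R : realType) (P : probability T R) (K : Type) (V V' : T -> K -> R) : Prop :=
  forall C : set (K -> R), smallest (sigma_algebra setT) (@cylinder_sets K R) C ->
    P (V @^-1` C) = P (V' @^-1` C).

Definition titan_private (d : measure_display) (T : measurableType d)
    (R : realType) (P : probability T R) (m : nat) (e : rel 'I_m) (a : R)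
    (A : {set 'I_m}) (r : 'I_m -> 'I_m -> T -> R) : Prop :=
  forall x x' : 'I_m -> R,
    (forall i, 0 <= x i < a) -> (forall i, 0 <= x' i < a) ->
    (forall i, i \in A -> x i = x' i) ->
    \sum_i x i = \sum_i x' i ->
    same_distribution P (fun w => titan_view e a A x (fun i j => r i j w))
                        (fun w => titan_view e a A x' (fun i j => r i j w)).

(* Main.v *)
Require Import Defs.
From HB Require Import structures.
From mathcomp Require Import all_boot all_order all_algebra.
From mathcomp Require Import all_classical all_reals all_analysis.
From mathcomp Require Import measurable_realfun.
From mathcomp Require Import ring lra.
Import Order.TTheory GRing.Theory Num.Theory.
Local Open Scope classical_set_scope.
Local Open Scope ring_scope.
Section modR_lemmas.
Variables (R : realType) (M : R).
Hypothesis M0 : 0 < M.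

Lemma modR_uniq (y z : R) (k : int) : 0 <= z < M -> y - z = k%:~R * M ->
  modR M y = z.
Proof.
move=> /andP[z0 zM] yz.
have fl : Num.floor (y / M) = k.
  apply: floor_def; have -> : y / M = k%:~R + z / M.
    by rewrite -[y](subrK z) yz mulrDl mulfK ?gt_eqF.
  have h1 : 0 <= z / M by exact: divr_ge0 z0 (ltW M0).
  have h2 : z / M < 1 by rewrite ltr_pdivrMr// mul1r.
  rewrite intrD /=. apply/andP; split; first by rewrite lerDl.
  by rewrite ltrD2l.
by rewrite /modR fl -yz opprB addrC subrK.
Qed.

Lemma modR_range (y : R) : 0 <= modR M y < M.
Proof.
rewrite /modR; have := floor_itv (y / M) => /andP[h1 h2].
move: h1; rewrite ler_pdivlMr// => h1.
move: h2; rewrite ltr_pdivrMr// intrD mulrDl mul1r => h2.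
apply/andP; split; lra.
Qed.

Definition congR (y z : R) := exists k : int, y - z = k%:~R * M.

Lemma congR_modR (y : R) : congR y (modR M y).
Proof. by exists (Num.floor (y / M)); rewrite /modR opprB addrC subrK. Qed.

Lemma modR_congr (y z : R) : congR y z -> modR M y = modR M z.
Proof.
move=> [k yz]; have [l zl] := congR_modR z.
apply: (@modR_uniq _ _ (k + l)); first exact: modR_range.
rewrite intrD mulrDl -yz -zl; ring.
Qed.
End modR_lemmas.
Arguments modR_uniq {R M} M0 {y z} k.
Arguments modR_range {R M} M0 y.
Arguments modR_congr {R M} M0 {y z}.
Arguments congR {R} M y z.
Arguments congR_modR {R} M y.
Section pfm_sec.
Local Open Scope ereal_scope.
Context d d' (T1 : measurableType d) (T2 : measurableType d') (R : realType).
Variables (mu : {measure set T1 -> \bar R}) (f : T1 -> T2).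
Hypothesis mf : measurable_fun setT f.

Definition pfm (_ : measurable_fun setT f) := pushforward mu f.

Let pfm0 : pfm mf set0 = 0.
Proof. by rewrite /pfm /pushforward preimage_set0 measure0. Qed.

Let pfm_ge0 A : 0 <= pfm mf A.
Proof. exact: measure_ge0. Qed.

Let pfm_sigma_additive : semi_sigma_additive (pfm mf).
Proof.
move=> F mF tF mUF; rewrite /pfm /pushforward preimage_bigcup.
apply: measure_semi_sigma_additive.
- by move=> n; rewrite -[X in measurable X]setTI; exact: mf.
- apply/trivIsetP => /= i j _ _ ij; rewrite -preimage_setI.
  by move/trivIsetP : tF => /(_ _ _ _ _ ij) ->//; rewrite preimage_set0.
- by rewrite -preimage_bigcup -[X in measurable X]setTI; exact: mf.
Qed.

HB.instance Definition _ := isMeasure.Build _ _ _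
  (pfm mf) pfm0 pfm_ge0 pfm_sigma_additive.
End pfm_sec.
Arguments pfm {d d' T1 T2 R} mu {f} _.

Section shift_lemmas.
Variables (R : realType).

Lemma meas_shift (t : R) (S : set R) : measurable S ->
  measurable [set x | S (x + t)].
Proof.
move=> mS.
have mf : measurable_fun setT (fun x : R => x + t).
  by apply: measurable_funD => //; exact: measurable_cst.
by have := mf measurableT S mS; rewrite setTI.
Qed.

Lemma lebesgue_shift (t : R) (S : set R) : measurable S ->
  lebesgue_measure [set x | S (x + t)] = lebesgue_measure S.
Proof.
move=> mS.
have mf0 : measurable_fun (setT : set (measurableTypeR R)) (fun x : R => x + t).
  by apply: measurable_funD => //; exact: measurable_cst.
have mf : measurable_fun (setT : set (measurableTypeR R))
   ((fun x : R => x + t) : measurableTypeR R -> measurableTypeR R) by exact: mf0.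
have := @lebesgue_measure_unique R (@pfm _ _ (measurableTypeR R) (measurableTypeR R) R lebesgue_measure _ mf).
move=> /(_ _ S mS) ->; last first.
  move=> X /ocitvP[->|[[x1 x2] /= x12 ->]].
    by rewrite /pfm /pushforward /= preimage_set0 !measure0.
  rewrite /pfm /pushforward /=.
  have -> : (fun x : R => x + t) @^-1` `]x1, x2]%classic = `](x1 - t), (x2 - t)]%classic.
    apply/seteqP; split => x /=; rewrite !in_itv /= => /andP[h1 h2];
      apply/andP; split; lra.
  rewrite !lebesgue_measure_itv /= !lte_fin ltrD2r x12.
  by rewrite -!EFinD; congr (_%:E); ring.
by [].
Qed.
End shift_lemmas.
Section modR_shift.
Variables (R : realType) (M : R).
Hypothesis M0 : 0 < M.

Lemma measurable_modR : measurable_fun (setT : set R) (modR M).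
Proof.
rewrite /modR; apply: measurable_funB => //.
apply: nondecreasing_measurable => // x y xy.
rewrite ler_pM2r// ler_int; apply: le_floor.
by rewrite ler_pM2r// invr_gt0.
Qed.

Lemma meas_modR_pre (c : R) (B : set R) : measurable B ->
  measurable [set u : R | B (modR M (u + c))].
Proof.
move=> mB; have : measurable_fun (setT : set R) (fun u : R => modR M (u + c)).
  apply: (measurableT_comp measurable_modR).
  by apply: measurable_funD => //; exact: measurable_cst.
by move=> /(_ measurableT B mB); rewrite setTI.
Qed.

Lemma lebesgue_modR_shift (dl : R) (B : set R) : measurable B ->
  lebesgue_measure ([set u : R | B (modR M (u + dl))] `&` `[0%R, M[%classic) =
  lebesgue_measure (B `&` `[0%R, M[%classic).
Proof.
move=> mB; have /andP[] := modR_range M0 dl.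
set c := modR M dl => c0 cM.
have dc : dl - c = (Num.floor (dl / M))%:~R * M by rewrite /c /modR opprB addrC subrK.
clearbody c.
have E1 u : 0 <= u < M - c -> modR M (u + dl) = u + c.
  move=> /andP[u0 uM]; apply: (modR_uniq M0 (Num.floor (dl / M))).
    by apply/andP; split; lra.
  by rewrite -dc; ring.
have E2 u : M - c <= u < M -> modR M (u + dl) = u + (c - M).
  move=> /andP[u0 uM]; apply: (modR_uniq M0 (Num.floor (dl / M) + 1)).
    by apply/andP; split; lra.
  by rewrite intrD mulrDl -dc; ring.
have -> : [set u | B (modR M (u + dl))] `&` `[0%R, M[%classic =
    [set u | (B `&` `[c, M[%classic) (u + c)] `|`
    [set u | (B `&` `[0%R, c[%classic) (u + (c - M))].
  apply/seteqP; split => u /=.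
    rewrite in_itv /= => -[Bu /andP[u0 uM]].
    have [uc|uc] := ltP u (M - c).
      have e : modR M (u + dl) = u + c by rewrite E1 // u0 uc.
      left; split; first by rewrite -e.
      by rewrite in_itv /=; apply/andP; split; lra.
    have e : modR M (u + dl) = u + (c - M) by rewrite E2 // uc uM.
    right; split; first by rewrite -e.
    by rewrite in_itv /=; apply/andP; split; lra.
  rewrite !in_itv /= => -[[Bu /andP[h1 h2]]|[Bu /andP[h1 h2]]].
    rewrite E1 //; first by split => //; apply/andP; split; lra.
    by apply/andP; split; lra.
  rewrite E2 //; first by split => //; apply/andP; split; lra.
  by apply/andP; split; lra.
have mI (x y : R) : measurable (B `&` `[x, y[%classic) by apply: measurableI.
rewrite measureU; first last.
- apply/seteqP; split => u //=; rewrite !in_itv /= => -[[_ /andP[h1 h2]] [_ /andP[h3 h4]]].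
  lra.
- exact: meas_shift.
- exact: meas_shift.
transitivity (lebesgue_measure (B `&` `[c, M[%classic) +
              lebesgue_measure (B `&` `[0%R, c[%classic))%E.
  by congr (_ + _)%E; apply: lebesgue_shift.
rewrite -measureU; try exact: mI; last first.
  apply/seteqP; split => u //=; rewrite !in_itv /= => -[[_ /andP[h1 h2]] [_ /andP[h3 h4]]].
  lra.
congr (lebesgue_measure _); apply/seteqP; split => u /=; rewrite !in_itv /=.
  by move=> [[Bu /andP[h1 h2]]|[Bu /andP[h1 h2]]]; split => //; apply/andP; split; lra.
move=> [Bu /andP[h1 h2]]; have [uc|uc] := ltP u c.
  by right; split => //; apply/andP; split; lra.
by left; split => //; apply/andP; split; lra.
Qed.
End modR_shift.
Arguments measurable_modR {R M} M0.
Arguments meas_modR_pre {R M} M0 c {B}.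
Arguments lebesgue_modR_shift {R M} M0 dl {B}.
Lemma unif_shift d (T : measurableType d) (R : realType) (P : probability T R)
  (X : T -> R) (M dl : R) (B : set R) : 0 < M -> uniform_rv P X M ->
  measurable B ->
  P (X @^-1` [set u : R | B (modR M (u + dl))]) = P (X @^-1` B).
Proof.
move=> M0 [mX hX] mB; rewrite !hX //; last exact: meas_modR_pre.
by rewrite lebesgue_modR_shift.
Qed.

Lemma sum_if1 (R : realType) (I : finType) (P : pred I) (s : I) (c : R) :
  \sum_(j | P j) (if j == s then c else 0) = if P s then c else 0.
Proof.
case Ps: (P s).
  rewrite (bigD1 s) //= eqxx big1 ?addr0 // => j /andP[_ /negbTE ->] //.
apply: big1 => j Pj; case: eqP => // js; move: Pj; by rewrite js Ps.
Qed.

Section flow.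
Variables (R : realType) (m : nat) (e : rel 'I_m) (A : {set 'I_m}).

Definition divf (dlt : 'I_m * 'I_m -> R) (i : 'I_m) : R :=
  \sum_(j | e j i) dlt (j, i) - \sum_(j | e i j) dlt (i, j).

Lemma divfD f g i : divf (fun q => f q + g q) i = divf f i + divf g i.
Proof. rewrite /divf !big_split /=; ring. Qed.

Lemma divf0 i : divf (fun _ => 0) i = 0.
Proof. by rewrite /divf !big1 // subrr. Qed.

Lemma divf_sum (I : finType) (Q : pred I) (F : I -> 'I_m * 'I_m -> R) i :
  divf (fun q => \sum_(k | Q k) F k q) i = \sum_(k | Q k) divf (F k) i.
Proof.
rewrite /divf (exchange_big _ _ _ (fun j => e j i)).
by rewrite (exchange_big _ _ _ (fun j => e i j)) -sumrB.
Qed.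

Definition edgef (s t : 'I_m) (c : R) (q : 'I_m * 'I_m) : R :=
  if e s t then (if q == (s, t) then c else 0)
  else (if q == (t, s) then - c else 0).

Lemma sum_in (u v : 'I_m) (c : R) (i : 'I_m) :
  \sum_(j | e j i) (if (j, i) == (u, v) then c else 0) =
  if (i == v) && e u v then c else 0.
Proof.
have [->|iv] := eqVneq i v; last first.
  by rewrite big1 // => j _; rewrite xpair_eqE (negbTE iv) andbF.
rewrite /=; under eq_bigr => j _ do rewrite xpair_eqE eqxx andbT.
exact: sum_if1.
Qed.

Lemma sum_out (u v : 'I_m) (c : R) (i : 'I_m) :
  \sum_(j | e i j) (if (i, j) == (u, v) then c else 0) =
  if (i == u) && e u v then c else 0.
Proof.
have [->|iu] := eqVneq i u; last first.
  by rewrite big1 // => j _; rewrite xpair_eqE (negbTE iu).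
rewrite /=; under eq_bigr => j _ do rewrite xpair_eqE eqxx /=.
exact: sum_if1.
Qed.

Lemma divf_edge s t c i : e s t || e t s ->
  divf (edgef s t c) i = (if i == t then c else 0) - (if i == s then c else 0).
Proof.
rewrite /divf /edgef; case est: (e s t) => /= ets.
  by rewrite sum_in sum_out est !andbT.
rewrite sum_in sum_out ets !andbT.
by case: (i == s); case: (i == t) => /=; ring.
Qed.

Fixpoint pathf (c : R) (s : 'I_m) (p : seq 'I_m) : 'I_m * 'I_m -> R :=
  if p is t :: p' then (fun q => edgef s t c q + pathf c t p' q)
  else (fun _ => 0).

Definition hg := [rel x y | [&& ubar e x y, x \notin A & y \notin A]].

Lemma divf_path c s p i : path hg s p ->
  divf (pathf c s p) i = (if i == last s p then c else 0) - (if i == s then c else 0).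
Proof.
elim: p s => [|t p IH] s /=; first by rewrite divf0 subrr.
move=> /andP[/and3P[/andP[_ ust] _ _] pth].
rewrite divfD IH // divf_edge //; ring.
Qed.

Lemma pathf_supp c s p q : s \notin A -> path hg s p ->
  ~~ [&& e q.1 q.2, q.1 \notin A & q.2 \notin A] -> pathf c s p q = 0.
Proof.
elim: p s => [|t p IH] s sA //= /andP[/and3P[/andP[_ ust] _ tA] pth] hq.
rewrite IH // addr0 /edgef; case: ifP => est.
  case: eqP => [qst|]; last done.
  by move: hq; rewrite qst /= est sA tA.
case: eqP => [qts|]; last done.
by move: ust hq; rewrite qts /= est /= => ->; rewrite sA tA.
Qed.

Lemma flow_exists (b : 'I_m -> R) :
  (forall u v, u \notin A -> v \notin A -> connect hg u v) ->
  \sum_(i | i \notin A) b i = 0 ->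
  exists dlt : 'I_m * 'I_m -> R,
    (forall q, ~~ [&& e q.1 q.2, q.1 \notin A & q.2 \notin A] -> dlt q = 0) /\
    (forall i, i \notin A -> divf dlt i = b i).
Proof.
move=> hconn hsum.
case: (pickP (fun i => i \notin A)) => [i0 i0A|none]; last first.
  by exists (fun _ => 0); split => // i; rewrite none.
have hp k : exists p, (k \notin A) ==> (path hg i0 p && (k == last i0 p)).
  case kA: (k \notin A); last by exists [::].
  have /connectP[p pth kl] := hconn i0 k i0A kA.
  by exists p; rewrite pth kl eqxx.
have [pk hpk] := choice hp.
exists (fun q => \sum_(k | k \notin A) pathf (b k) i0 (pk k) q); split.
  move=> q hq; apply: big1 => k kA.
  move/implyP: (hpk k) => /(_ kA) /andP[pth _].
  exact: pathf_supp.
move=> i iA; rewrite divf_sum.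
transitivity (\sum_(k | k \notin A)
   ((if k == i then b k else 0) - (if i == i0 then b k else 0))).
  apply: eq_bigr => k kA.
  move/implyP: (hpk k) => /(_ kA) /andP[pth /eqP kl].
  by rewrite divf_path // -kl eq_sym.
rewrite sumrB.
have -> : \sum_(k | k \notin A) (if k == i then b k else 0) = b i.
  rewrite (eq_bigr (fun k => if k == i then b i else 0)).
    by rewrite sum_if1 iA.
  by move=> k _; case: eqP => // ->.
case: (i == i0); first by rewrite hsum subr0.
by rewrite big1 ?subr0.
Qed.
End flow.
Definition fsp (K : Type) (R : realType) := K -> R.
HB.instance Definition _ (K : Type) (R : realType) := Choice.on (fsp K R).
HB.instance Definition _ (K : Type) (R : realType) :=
  isPointed.Build (fsp K R) (fun _ => 0).

Definition boxes (K : Type) (R : realType) : set (set (fsp K R)) :=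
  [set [set f | forall k, B k (f k)] | B in [set B : K -> set R | forall k, measurable (B k)]].

Definition BoxT (K : Type) (R : realType) := g_sigma_algebraType (boxes K R).
Definition CylT (K : Type) (R : realType) :=
  g_sigma_algebraType (@cylinder_sets K R : set (set (fsp K R))).

Lemma meas_forall d (T : measurableType d) (I : finType) (Q : I -> set T) :
  (forall i, measurable (Q i)) -> measurable [set w | forall i, Q i w].
Proof.
move=> mQ.
have -> : [set w | forall i, Q i w] = \bigcap_(i in [set` enum I]) Q i.
  apply/seteqP; split => w /= h i //; apply: h => /=; by rewrite mem_enum.
by rewrite bigcap_seq; apply: bigsetI_measurable => i _; exact: mQ.
Qed.

Lemma coord_meas (K : eqType) (R : realType) (k : K) :
  measurable_fun (setT : set (BoxT K R)) (fun f => f k).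
Proof.
move=> _ B mB; rewrite setTI; apply: sub_sigma_algebra.
exists (fun k' => if k' == k then B else setT).
  by move=> k' /=; case: eqP.
apply/seteqP; split => f /=.
  by move=> /(_ k); rewrite eqxx.
by move=> Bf k'; case: eqP => // ->.
Qed.

Lemma to_box_meas d (T : measurableType d) (K : finType) (R : realType)
  (F : T -> fsp K R) :
  (forall k, measurable_fun setT (fun w => F w k)) ->
  measurable_fun setT (F : T -> BoxT K R).
Proof.
move=> hF; apply: (@measurability _ _ _ (BoxT K R) setT F (boxes K R)) => //.
move=> _ [_ [B mB <-] <-]; rewrite setTI.
apply: meas_forall => k.
by have := hF k measurableT (B k) (mB k); rewrite setTI.
Qed.

Lemma to_cyl_meas d (T : measurableType d) (K : Type) (R : realType)
  (F : T -> fsp K R) :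
  (forall k, measurable_fun setT (fun w => F w k)) ->
  measurable_fun setT (F : T -> CylT K R).
Proof.
move=> hF; apply: (@measurability _ _ _ (CylT K R) setT F (@cylinder_sets K R)) => //.
move=> _ [_ [k [B [mB ->]]] <-]; rewrite setTI.
by have := hF k measurableT B mB; rewrite setTI.
Qed.

Lemma boxesI (K : Type) (R : realType) : setI_closed (boxes K R).
Proof.
move=> _ _ [B1 mB1 <-] [B2 mB2 <-].
exists (fun k => B1 k `&` B2 k); first by move=> k; apply: measurableI.
apply/seteqP; split => f /=.
  by move=> h; split => k; have [] := h k.
by move=> [h1 h2] k; split.
Qed.

Lemma boxesT (K : Type) (R : realType) : boxes K R setT.
Proof. by exists (fun _ => setT) => //; apply/seteqP; split. Qed.
Section main_prob.
Variables (R : realType) (m : nat) (e : rel 'I_m) (d : measure_display)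
  (T : measurableType d) (P : probability T R) (r : 'I_m -> 'I_m -> T -> R).
Variable M : R.
Hypothesis M0 : 0 < M.
Hypothesis hunif : forall i j, e i j -> uniform_rv P (r i j) M.
Hypothesis hind :
  independent_family P (fun p : 'I_m * 'I_m => e p.1 p.2) (fun p => r p.1 p.2).

Definition rho (w : T) : fsp ('I_m * 'I_m) R :=
  fun p => if e p.1 p.2 then r p.1 p.2 w else 0.

Lemma rho_meas : measurable_fun setT (rho : T -> BoxT ('I_m * 'I_m) R).
Proof.
apply: to_box_meas => p; unfold rho; case ep: (e p.1 p.2).
  by case: (hunif _ _ ep).
exact: measurable_cst.
Qed.

Lemma box_eq (B B' : 'I_m * 'I_m -> set R) :
  (forall p, measurable (B p)) -> (forall p, measurable (B' p)) ->
  (forall p, ~~ e p.1 p.2 -> (B p 0 <-> B' p 0)) ->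
  (forall p, e p.1 p.2 -> P (r p.1 p.2 @^-1` B p) = P (r p.1 p.2 @^-1` B' p)) ->
  P [set w | forall p, B p (rho w p)] = P [set w | forall p, B' p (rho w p)].
Proof.
move=> mB mB' h0 h1.
have key (C : 'I_m * 'I_m -> set R) : (forall p, ~~ e p.1 p.2 -> C p 0) ->
    [set w | forall p, C p (rho w p)] =
    [set w | forall p, e p.1 p.2 -> C p (r p.1 p.2 w)].
  move=> hC; apply/seteqP; split => w /= h p.
    by move=> ep; have := h p; rewrite /rho ep.
  rewrite /rho; case: ifP => ep; first exact: h.
  by apply: hC; rewrite ep.
case: (pselect (forall p, ~~ e p.1 p.2 -> B p 0)) => hB.
  have hB' : forall p, ~~ e p.1 p.2 -> B' p 0.
    by move=> p np; apply/(h0 p np)/hB.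
  rewrite (key _ hB) (key _ hB').
  have := hind B mB; rewrite /= => ->.
  have := hind B' mB'; rewrite /= => ->.
  by apply: eq_bigr => p ep; exact: h1.
have [p np nB] : exists2 p, ~~ e p.1 p.2 & ~ B p 0.
  apply: contrapT => hn; apply: hB => p np; apply: contrapT => nB.
  by apply: hn; exists p.
have E (C : 'I_m * 'I_m -> set R) : ~ C p 0 -> [set w | forall p, C p (rho w p)] = set0.
  move=> nC; apply/seteqP; split => w //= /(_ p).
  by rewrite /rho (negbTE np).
rewrite !E //; by move=> /(h0 p np).
Qed.

Definition phi (dlt : 'I_m * 'I_m -> R) (f : fsp ('I_m * 'I_m) R) : fsp ('I_m * 'I_m) R :=
  fun p => if dlt p == 0 then f p else modR M (f p + dlt p).

Lemma phi_meas dlt :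
  measurable_fun setT (phi dlt : BoxT ('I_m * 'I_m) R -> BoxT ('I_m * 'I_m) R).
Proof.
apply: to_box_meas => p; rewrite /phi; case: eqP => _.
  exact: coord_meas.
have hg : measurable_fun setT (fun f : BoxT ('I_m * 'I_m) R => f p + dlt p).
  by apply: measurable_funD; [exact: coord_meas | exact: measurable_cst].
exact: (measurableT_comp (measurable_modR M0) hg).
Qed.

Lemma law_phi dlt : (forall q, ~~ e q.1 q.2 -> dlt q = 0) ->
  forall D : set (BoxT ('I_m * 'I_m) R), measurable D ->
  P ((fun w => phi dlt (rho w)) @^-1` D) = P (rho @^-1` D).
Proof.
move=> hdlt D mD.
have mr := rho_meas.
have mpr : measurable_fun setT
    ((fun w => phi dlt (rho w)) : T -> BoxT ('I_m * 'I_m) R).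
  exact: (measurableT_comp (phi_meas dlt) mr).
have := @measure_unique _ _ (BoxT ('I_m * 'I_m) R) (boxes _ R) (fun _ => setT)
  erefl (@boxesI _ R) (fun _ => boxesT _ R) _ (pfm P mpr) (pfm P mr).
apply => //.
- by apply/seteqP; split => // x _; exists 0%N.
- move=> _ [B mB <-]; rewrite /pfm /pushforward /=.
  pose B' p := if dlt p == 0 then B p else [set u : R | B p (modR M (u + dlt p))].
  transitivity (P [set w | forall p, B' p (rho w p)]).
    congr (P _); apply/seteqP; split => w /= h p; have := h p;
      by rewrite /B' /phi; case: eqP.
  apply: box_eq.
  + move=> p; rewrite /B'; case: eqP => _; first exact: mB.
    exact: meas_modR_pre.
  + exact: mB.
  + by move=> p np; rewrite /B' hdlt // eqxx.
  + move=> p ep; rewrite /B'; case: eqP => // _.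
    exact: (@unif_shift _ _ _ P _ M (dlt p) (B p) M0 (hunif _ _ ep) (mB p)).
- move=> k; rewrite /pfm /pushforward /= preimage_setT probability_setT.
  exact: ltry.
Qed.
End main_prob.
Lemma modR_step (R : realType) (M : R) (M0 : 0 < M) (xi xi' T T' : R) (K : int) :
  T' - T = (xi - xi') - K%:~R * M ->
  modR M (xi' + modR M T') = modR M (xi + modR M T).
Proof.
move=> hT; apply: (modR_congr M0).
exists (Num.floor (T / M) - Num.floor (T' / M) - K).
rewrite /modR !intrB.
move: (Num.floor (T / M)) (Num.floor (T' / M)) => F1 F2.
rewrite -[T'](subrK T) hT; ring.
Qed.

Section view_sec.
Variables (R : realType) (m : nat) (e : rel 'I_m) (a : R) (A : {set 'I_m}).

Lemma view_edges x (r1 r2 : 'I_m -> 'I_m -> R) :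
  (forall i j, e i j -> r1 i j = r2 i j) ->
  titan_view e a A x r1 = titan_view e a A x r2.
Proof.
move=> h; apply/funext => -[[i|i]|[i j]] //=.
  case: ifP => // _; rewrite /titan_xt /titan_t.
  congr (modR _ (_ + modR _ (_ - _))); apply: eq_bigr => j ej; by rewrite h.
by case: ifP => // /andP[eij _]; exact: h.
Qed.

Lemma view_phi (M0 : 0 < m%:R * a) x x' dlt :
  (forall i, i \in A -> x i = x' i) ->
  (forall q, ~~ [&& e q.1 q.2, q.1 \notin A & q.2 \notin A] -> dlt q = 0) ->
  (forall i, i \notin A -> divf R m e dlt i = x i - x' i) ->
  forall f : fsp ('I_m * 'I_m) R,
  titan_view e a A x (fun i j => f (i, j)) =
  titan_view e a A x' (fun i j => phi R m (m%:R * a) dlt f (i, j)).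
Proof.
move=> hx hsupp hdiv f; set M := m%:R * a.
apply/funext => -[[i|i]|[i j]] /=.
- by case: ifP => // iA; exact: hx.
- case: ifP => // iA; rewrite /titan_xt /titan_t.
  pose kap p := if dlt p == 0 then 0 else Num.floor ((f p + dlt p) / M).
  have phiE p : phi R m M dlt f p = f p + dlt p - (kap p)%:~R * M.
    rewrite /phi /kap; case: eqP => [->|_]; last by [].
    by rewrite addr0 mul0r subr0.
  have Sin : \sum_(j | e j i) phi R m M dlt f (j, i) =
      \sum_(j | e j i) f (j, i) + \sum_(j | e j i) dlt (j, i) -
      (\sum_(j | e j i) kap (j, i))%:~R * M.
    rewrite (eq_bigr _ (fun j _ => phiE (j, i))) sumrB big_split /=.
    by rewrite rmorph_sum mulr_suml.
  have Sout : \sum_(j | e i j) phi R m M dlt f (i, j) =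
      \sum_(j | e i j) f (i, j) + \sum_(j | e i j) dlt (i, j) -
      (\sum_(j | e i j) kap (i, j))%:~R * M.
    rewrite (eq_bigr _ (fun j _ => phiE (i, j))) sumrB big_split /=.
    by rewrite rmorph_sum mulr_suml.
  symmetry; apply: (@modR_step _ _ M0 _ _ _ _ (\sum_(j | e j i) kap (j, i) - \sum_(j | e i j) kap (i, j))).
  rewrite Sin Sout -(hdiv i iA) /divf intrB /M; ring.
- case: ifP => // /andP[eij hA].
  rewrite /phi hsupp ?eqxx //= eij /=.
  by case/orP: hA => ->; rewrite ?andbF.
Qed.
End view_sec.

Lemma conn_from_wvc (m : nat) (e : rel 'I_m) (tau : nat) (A : {set 'I_m}) :
  (tau.+1 <= weak_vertex_connectivity e)%N -> (#|A| <= tau)%N ->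
  (0 < m)%N /\ forall u v, u \notin A -> v \notin A -> connect (hg m e A) u v.
Proof.
move=> hw hA.
have [k kc kt] : exists2 k : 'I_m.+1, k_connected (ubar e) k & (tau < k)%N.
  apply: contrapT => hn; move: hw; apply/negP; rewrite -ltnNge ltnS.
  apply/bigmax_leqP => k kc; rewrite leqNgt; apply/negP => kt.
  by apply: hn; exists k.
move: kc => /andP[km /forallP /(_ A) /implyP hS].
have /hS hc : (#|A| < k)%N by apply: leq_ltn_trans hA kt.
split; first by apply: leq_ltn_trans km.
move=> u v uA vA.
by move/forallP: hc => /(_ u) /forallP /(_ v) /implyP /(_ uA) /implyP /(_ vA).
Qed.
Lemma meas_sum_coord (K J : finType) (R : realType) (Q : pred J) (g : J -> K) :
  measurable_fun (setT : set (BoxT K R)) (fun f => \sum_(j | Q j) f (g j)).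
Proof.
have -> : (fun f : BoxT K R => \sum_(j | Q j) f (g j)) =
    (fun f => \sum_(j <- index_enum J) (if Q j then f (g j) else 0)).
  by apply/funext => f; rewrite big_mkcond.
apply: measurable_sum => j; case: (Q j); first exact: coord_meas.
exact: measurable_cst.
Qed.

Theorem theorem3 (R : realType) (m : nat) (e : rel 'I_m) (tau : nat) (a : R)
  (A : {set 'I_m}) (d : measure_display) (T : measurableType d)
  (P : probability T R) (r : 'I_m -> 'I_m -> T -> R) :
  0 < a ->
  (tau.+1 <= weak_vertex_connectivity e)%N ->
  (#|A| <= tau)%N ->
  (forall i j, e i j -> uniform_rv P (r i j) (m%:R * a)) ->
  independent_family P (fun p : 'I_m * 'I_m => e p.1 p.2) (fun p => r p.1 p.2) ->
  titan_private P e a A r.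
Proof.
move=> a0 hw hA hunif hind x x' hx hx' hxA hsum C hC.
have [m0 hconn] := @conn_from_wvc m e tau A hw hA.
have M0 : 0 < m%:R * a by rewrite mulr_gt0 // ltr0n.
pose b := fun i => x i - x' i.
have hb : \sum_(i | i \notin A) b i = 0.
  have e1 : \sum_i b i = \sum_(i | i \in A) b i + \sum_(i | i \notin A) b i.
    by rewrite (bigID (fun i => i \in A)).
  have e2 : \sum_(i | i \in A) b i = 0.
    by apply: big1 => i iA; rewrite /b hxA // subrr.
  by move: e1; rewrite e2 add0r /b sumrB hsum subrr => <-.
have [dlt [hsupp hdiv]] := @flow_exists R m e A b hconn hb.
have hdlt : forall q, ~~ e q.1 q.2 -> dlt q = 0.
  by move=> q nq; apply: hsupp; rewrite (negbTE nq).
have E1 : (fun w => titan_view e a A x (fun i j => r i j w)) =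
   (fun w => titan_view e a A x'
      (fun i j => phi R m (m%:R * a) dlt (rho R m e _ _ r w) (i, j))).
  apply/funext => w; rewrite -(@view_phi R m e a A M0 x x' dlt hxA hsupp hdiv).
  by apply: view_edges => i j eij; rewrite /rho /= eij.
have E2 : (fun w => titan_view e a A x' (fun i j => r i j w)) =
   (fun w => titan_view e a A x' (fun i j => rho R m e _ _ r w (i, j))).
  by apply/funext => w; apply: view_edges => i j eij; rewrite /rho /= eij.
rewrite E1 E2.
pose G' := fun f : fsp ('I_m * 'I_m) R => titan_view e a A x' (fun i j => f (i, j)).
have mG : measurable_fun setT (G' : BoxT ('I_m * 'I_m) R -> CylT (view_index m) R).
  apply: to_cyl_meas => -[[i|i]|[i j]]; rewrite /G' /titan_view /=.
  - by case: (i \in A); exact: measurable_cst.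
  - case: (i \notin A); last exact: measurable_cst.
    rewrite /titan_xt /titan_t.
    apply: (measurableT_comp (measurable_modR M0)).
    apply: measurable_funD; first exact: measurable_cst.
    apply: (measurableT_comp (measurable_modR M0)).
    by apply: measurable_funB; apply: meas_sum_coord.
  - case: (e i j && _); last exact: measurable_cst.
    exact: coord_meas.
have mC : measurable (G' @^-1` C : set (BoxT ('I_m * 'I_m) R)).
  by have := mG measurableT C hC; rewrite setTI.
exact: (@law_phi R m e d T P r _ M0 hunif hind dlt hdlt _ mC).
Qed.
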